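(* Let $P,Q$ be lattice paths from $(0,0)$ to $(m,r)$ with $P$ never going above $Q$ and $[P,Q]$ a connected skew shape. Then the number of edges of the lattice path matroid polytope $\mathcal{P}(M[P,Q])$ equals $\sum_L \mathrm{area}(L',L)$, where the sum runs over all lattice paths $L$ from $(0,0)$ to $(m,r)$ inside the region $[P,Q]$, and $\mathrm{area}(L',L)$ is the number of unit boxes in the region between $L'=L'(P,L)$ and $L$.
   Context: Lattice paths use steps $E=(1,0)$, $N=(0,1)$. $M[P,Q]$ is the matroid on $[m+r]$ whose bases are the $r$-subsets $B$ such that the lattice path with North steps exactly at positions in $B$ stays in the region between $P$ and $Q$; $\mathcal{P}(M[P,Q])=\mathrm{conv}\{\sum_{b\in B}e_b: B\text{ a basis}\}\subseteq\mathbb{R}^{m+r}$. $[P,Q]$ connected means $P$ and $Q$ meet only at $(0,0)$ and $(m,r)$. For a lattice path $L$ inside $[P,Q]$ from $(0,0)$ to $(m,r)$, $L'=L'(P,L)$ is the lattice path that passes through all intersection points of $P$ and $L$ and, for each maximal connected region between $P$ and $L$ with starting point $(x,y)$ and ending point $(x+a,y+b)$, consists of the steps $E^aN^b$ from $(x,y)$ to $(x+a,y+b)$. *)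

(* Defs.v *)
From HB Require Import structures.
From mathcomp Require Import all_boot all_order all_algebra.
From mathcomp Require Import reals.
Set Implicit Arguments. Unset Strict Implicit. Unset Printing Implicit Defensive.
Import Order.TTheory GRing.Theory Num.Theory.

(* A lattice path from (0,0) to (m,r) with n = m + r steps is encoded by the
   set B : {set 'I_n} of positions of its North steps (so #|B| = r);
   step i (0-based) is N iff i \in B, E otherwise. *)

Section Paths.
Variable n : nat.

Definition ht (B : {set 'I_n}) (k : nat) : nat :=
  #|[set i : 'I_n | (i \in B) && (i < k)]|.

Definition in_region (P Q L : {set 'I_n}) : bool :=
  [forall k : 'I_n.+1, (ht P k <= ht L k) && (ht L k <= ht Q k)].

Definition isect (P L : {set 'I_n}) (k : nat) : bool := ht P k == ht L k.

Definition seg_start (P L : {set 'I_n}) (i : 'I_n) : nat :=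
  \max_(k < i.+1 | isect P L k) k.
Definition seg_end (P L : {set 'I_n}) (i : 'I_n) : nat :=
  i.+1 + find (isect P L) (iota i.+1 (n - i)).

(* L' = L'(P,L): on each segment between consecutive meeting points of P and L,
   from (x,y) to (x+a,y+b), it consists of E^a N^b. *)
Definition Lprime (P L : {set 'I_n}) : {set 'I_n} :=
  [set i : 'I_n |
     let k1 := seg_start P L i in
     let k2 := seg_end P L i in
     let a := (k2 - k1) - (ht L k2 - ht L k1) in
     k1 + a <= i].

(* height of the E step of path B in column x (i.e. the x-th E step, 0-based) *)
Definition colh (B : {set 'I_n}) (x : nat) : nat :=
  #|[set i : 'I_n | (i \in B) &&
        (#|[set j : 'I_n | (j < i) && (j \notin B)]| <= x)]|.

Definition area (m : nat) (A B : {set 'I_n}) : nat :=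
  \sum_(x < m) ((colh A x - colh B x) + (colh B x - colh A x)).

Definition lpm_bases (r : nat) (P Q : {set 'I_n}) : {set {set 'I_n}} :=
  [set B : {set 'I_n} | (#|B| == r) && in_region P Q B].

Variable R : realType.
Local Open Scope ring_scope.

Definition ptvec (B : {set 'I_n}) : 'rV[R]_n := \row_(i < n) ((i \in B)%:R).

Definition dotv (c v : 'rV[R]_n) : R := \sum_(i < n) c 0 i * v 0 i.

(* vertex set of the face of conv(V) maximizing the linear functional c,
   for V the set of indicator vectors of the sets in Bs *)
Definition face_of (Bs : {set {set 'I_n}}) (c : 'rV[R]_n) : {set {set 'I_n}} :=
  [set B in Bs | [forall B' in Bs, dotv c (ptvec B') <= dotv c (ptvec B)]].

Definition diffmx (S : {set {set 'I_n}}) (B0 : {set 'I_n}) : 'M[R]_(#|S|, n) :=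
  \matrix_(j < #|S|, i < n) (ptvec (enum_val j) 0 i - ptvec B0 0 i).

(* S is the vertex set of an edge (1-dimensional face) of conv{ptvec B | B in Bs} *)
Definition is_edge (Bs S : {set {set 'I_n}}) : Prop :=
  (exists c : 'rV[R]_n, S = face_of Bs c) /\
  (exists2 B0, B0 \in S & \rank (diffmx S B0) = 1%N).

End Paths.

(* Main.v *)
Require Import Defs.
From HB Require Import structures.
From mathcomp Require Import all_boot all_order all_algebra.
From mathcomp Require Import reals.
From mathcomp Require Import zify.
Set Implicit Arguments. Unset Strict Implicit. Unset Printing Implicit Defensive.

Section Basic.
Variable n : nat.
Implicit Types (B X : {set 'I_n}) (f : pred 'I_n).

Lemma card_sum f : #|[set i | f i]| = \sum_(i < n) f i.
Proof. by rewrite -sum1dep_card big_mkcond /=; apply: eq_bigr => i _; case: (f i). Qed.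

Lemma sum_lt k : \sum_(i < n) (i < k) = minn k n.
Proof.
elim: n => [|n' IH]; first by rewrite big_ord0; lia.
rewrite big_ord_recr /= IH; case: (ltnP n' k) => H /=; lia.
Qed.

Lemma sum_split f lo hi : lo <= hi ->
  \sum_(i < n) (f i && (i < hi)) =
  \sum_(i < n) (f i && (i < lo)) + \sum_(i < n) (f i && (lo <= i) && (i < hi)).
Proof.
move=> Hlh; rewrite -big_split /=; apply: eq_bigr => i _.
case: (f i) => //=; case: (ltnP i lo) => H1; case: (ltnP i hi) => H2 //=; lia.
Qed.

Definition iv B lo hi := #|[set i : 'I_n | (i \in B) && (lo <= i) && (i < hi)]|.
Definition ivc B lo hi := #|[set i : 'I_n | (i \notin B) && (lo <= i) && (i < hi)]|.

Lemma ht_sum B k : ht B k = \sum_(i < n) ((i \in B) && (i < k)).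
Proof. by rewrite /ht card_sum. Qed.

Lemma iv_ht B lo hi : lo <= hi -> ht B hi = ht B lo + iv B lo hi.
Proof. by move=> H; rewrite !ht_sum /iv card_sum (sum_split _ H). Qed.

Lemma iv_ivc B lo hi : lo <= hi -> hi <= n -> iv B lo hi + ivc B lo hi = hi - lo.
Proof.
move=> H1 H2; rewrite /iv /ivc !card_sum -big_split /=.
have := sum_split predT H1; rewrite /=. rewrite !sum_lt (minn_idPl H2) (minn_idPl (leq_trans H1 H2)) => E.
rewrite [in RHS]E addKn.
by apply: eq_bigr => i _; case: (i \in B); rewrite /= ?addn0.
Qed.

Lemma ht_S B k (hk : k < n) : ht B k.+1 = ht B k + (Ordinal hk \in B).
Proof.
rewrite (iv_ht B (leqnSn k)); congr (_ + _).
rewrite /iv card_sum (bigD1 (Ordinal hk)) //= big1 ?addn0.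
  by rewrite leqnn ltnSn !andbT.
move=> i /eqP Hi; case: (i \in B) => //=; case: (leqP k i) => //= H1.
case: (ltnP i k.+1) => //= H2; exfalso; apply: Hi; apply: val_inj => /=; lia.
Qed.

Lemma ht_ge B k : n <= k -> ht B k = #|B|.
Proof.
move=> H; rewrite /ht; apply: eq_card => i; rewrite inE.
by have := ltn_ord i; case: (i \in B) => //= ?; apply: (leq_trans _ H).
Qed.

Lemma ht_mono B k k' : k <= k' -> ht B k <= ht B k'.
Proof. by move=> H; rewrite (iv_ht B H) leq_addr. Qed.

Lemma iv_le B lo hi : iv B lo hi <= hi - lo.
Proof.
rewrite /iv card_sum.
apply: (@leq_trans (\sum_(i < n) ((lo <= i) && (i < hi)))).
  by apply: leq_sum => i _; case: (i \in B).
have [H|H] := leqP lo hi.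
  have := sum_split predT H; rewrite /= !sum_lt; lia.
rewrite big1 // => i _; case: (leqP lo i) => //= ?; case: (ltnP i hi) => //= ?; lia.
Qed.

Lemma ht_le B k : ht B k <= k.
Proof. have := iv_le B 0 k; have := iv_ht B (leq0n k). rewrite /ht.
have -> : [set i : 'I_n | (i \in B) && (i < 0)] = set0 by apply/setP => i; rewrite !inE andbF.
rewrite cards0; lia. Qed.

Lemma ht0 B : ht B 0 = 0.
Proof. by have := ht_le B 0; lia. Qed.

Lemma cnt_int lo hi : hi <= n -> #|[set i : 'I_n | (lo <= i) && (i < hi)]| = hi - lo.
Proof.
move=> H; have := iv_ivc [set: 'I_n] (lo := lo) (hi := hi).
have -> : ivc [set: 'I_n] lo hi = 0.
  by rewrite /ivc; apply/eqP; rewrite cards_eq0; apply/eqP/setP => i; rewrite !inE.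
case: (leqP lo hi) => Hl.
  rewrite addn0 => <- //; apply: eq_card => i; rewrite !inE //.
move=> _; have -> : hi - lo = 0 by lia.
apply/eqP; rewrite cards_eq0; apply/eqP/setP => i; rewrite !inE.
by apply/negP => /andP[]; lia.
Qed.

Lemma ivc_mono B lo hi hi' : hi <= hi' -> ivc B lo hi <= ivc B lo hi'.
Proof.
move=> H; apply: subset_leq_card; apply/subsetP => i; rewrite !inE.
by move=> /andP[/andP[-> ->] ?] /=; lia.
Qed.

End Basic.
Section Seg.
Variable n : nat.
Variables P L : {set 'I_n}.
Hypothesis HPL : #|P| = #|L|.

Local Notation isc := (isect P L).
Definition ssn (x : nat) : nat := \max_(k < x.+1 | isect P L k) k.
Definition sen (x : nat) : nat := x.+1 + find (isect P L) (iota x.+1 (n - x)).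
Definition aa (p q : nat) := (q - p) - (ht L q - ht L p).

Lemma isect0 : isc 0.
Proof. by rewrite /isect !ht0. Qed.
Lemma isectn : isc n.
Proof. by rewrite /isect !ht_ge // HPL. Qed.

Lemma ssn_le x : ssn x <= x.
Proof. by apply/bigmax_leqP => k _; rewrite -ltnS. Qed.

Lemma ssn_max x k : k <= x -> isc k -> k <= ssn x.
Proof.
move=> H1 H2; have Hk : k < x.+1 by [].
exact: (@leq_bigmax_cond _ (fun k : 'I_x.+1 => isect P L k) (fun k : 'I_x.+1 => nat_of_ord k) (Ordinal Hk)).
Qed.

Lemma ssn_isect x : isc (ssn x).
Proof.
have Hp : 0 < #|[pred k : 'I_x.+1 | isect P L k]|.
  by apply/card_gt0P; exists ord0; rewrite inE /= isect0.
have [k0 Hk0 E] := eq_bigmax_cond (fun k : 'I_x.+1 => nat_of_ord k) Hp.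
rewrite /ssn; move: E; rewrite /=. move=> E. rewrite E. by move: Hk0; rewrite inE.
Qed.

Lemma ssn_spec x k : ssn x < k <= x -> ~~ isc k.
Proof.
move=> /andP[H1 H2]; apply/negP => H; have := ssn_max H2 H; lia.
Qed.

Lemma ssn_uniq x y : y <= x -> isc y -> (forall k, y < k <= x -> ~~ isc k) -> ssn x = y.
Proof.
move=> H1 H2 H3; have := ssn_max H1 H2; have := ssn_le x; have := ssn_isect x.
move=> Hi Hle Hge; apply/eqP; rewrite eqn_leq Hge andbT; rewrite leqNgt; apply/negP => Hlt.
by have := H3 (ssn x); rewrite Hlt Hle Hi => /(_ isT).
Qed.

Lemma sen_has x : x < n -> has (isect P L) (iota x.+1 (n - x)).
Proof.
move=> Hx; apply/hasP; exists n; last exact: isectn.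
rewrite mem_iota; apply/andP; split => //; lia.
Qed.

Lemma sen_gt x : x < sen x.
Proof. by rewrite /sen; lia. Qed.

Lemma sen_le x : x < n -> sen x <= n.
Proof.
move=> Hx; have := sen_has Hx; rewrite has_find size_iota /sen; lia.
Qed.

Lemma sen_isect x : x < n -> isc (sen x).
Proof.
move=> Hx; have H := sen_has Hx.
have Hf : find (isect P L) (iota x.+1 (n - x)) < n - x.
  by rewrite -[X in _ < X](size_iota x.+1 (n - x)) -has_find.
by have := nth_find 0 H; rewrite nth_iota.
Qed.

Lemma sen_spec x k : x < k < sen x -> ~~ isc k.
Proof.
move=> /andP[H1 H2]; have Hk : k - x.+1 < find (isect P L) (iota x.+1 (n - x)) by rewrite /sen in H2; lia.
have := before_find 0 Hk.
have Hs : k - x.+1 < n - x.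
  apply: (leq_trans Hk); have := find_size (isect P L) (iota x.+1 (n - x)); by rewrite size_iota.
by rewrite nth_iota // subnKC // => ->.
Qed.

Lemma sen_uniq x y : x < n -> x < y -> isc y -> (forall k, x < k < y -> ~~ isc k) -> sen x = y.
Proof.
move=> Hn H1 H2 H3; apply/eqP; rewrite eqn_leq; apply/andP; split.
  rewrite leqNgt; apply/negP => H; have := @sen_spec x y; rewrite H1 H H2; by move/(_ isT).
rewrite leqNgt; apply/negP => H; have := H3 (sen x); rewrite sen_gt H sen_isect //; by move/(_ isT).
Qed.

Lemma Lprime_in (i : 'I_n) : (i \in Lprime P L) = (ssn i + aa (ssn i) (sen i) <= i).
Proof. by rewrite /Lprime inE. Qed.

Lemma seg_in q x : isc q -> 0 < q -> q <= n -> ssn q.-1 <= x < q -> ssn x = ssn q.-1 /\ sen x = q.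
Proof.
move=> Hq Hq0 Hqn /andP[H1 H2].
split.
  apply: ssn_uniq => //; first exact: ssn_isect.
  move=> k /andP[K1 K2]; apply: (@ssn_spec q.-1 k); apply/andP; split; lia.
apply: sen_uniq => //; first lia.
move=> k /andP[K1 K2]; apply: (@ssn_spec q.-1 k); apply/andP; split; lia.
Qed.

Lemma seg_back q x : isc q -> 0 < q -> q <= n -> x < n -> sen x = q -> ssn q.-1 <= x.
Proof.
move=> Hq Hq0 Hqn Hx Hs; rewrite leqNgt; apply/negP => H.
have := @sen_spec x (ssn q.-1); rewrite H ssn_isect Hs /=.
have := ssn_le q.-1; move=> Hle; have -> : ssn q.-1 < q by lia.
by move/(_ isT).
Qed.

Local Notation Lp := (Lprime P L).

Lemma Lp_seg q (i : 'I_n) : isc q -> 0 < q -> q <= n -> ssn q.-1 <= i < q ->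
  (i \in Lp) = (ssn q.-1 + aa (ssn q.-1) q <= i).
Proof.
move=> H1 H2 H3 H4; have [E1 E2] := seg_in H1 H2 H3 H4.
by rewrite Lprime_in E1 E2.
Qed.

Lemma iv_Lp q k : isc q -> 0 < q -> q <= n -> ssn q.-1 <= k <= q ->
  iv Lp (ssn q.-1) k = k - (ssn q.-1 + aa (ssn q.-1) q).
Proof.
move=> H1 H2 H3 /andP[H4 H5].
rewrite /iv -(@cnt_int n _ k); last lia.
apply: eq_card => i; rewrite !inE.
case: (leqP (ssn q.-1) i) => Hi /=; last by rewrite andbF; apply/esym/negbTE; lia.
case: (ltnP i k) => Hk /=; last by rewrite !andbF.
rewrite !andbT; transitivity (i \in Lp); first by rewrite Lprime_in.
rewrite (Lp_seg (q := q)) //; apply/andP; split => //; lia.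
Qed.

Lemma ht_isect k : k <= n -> isc k -> ht Lp k = ht L k.
Proof.
elim/ltn_ind: k => k IH Hkn Hk.
case: (posnP k) => [->|Hk0]; first by rewrite !ht0.
set p := ssn k.-1.
have Hpk : p < k by have := ssn_le k.-1; rewrite /p; lia.
have Hp := ssn_isect k.-1.
rewrite (iv_ht Lp (ltnW Hpk)) (iv_ht L (ltnW Hpk)) IH //; last lia.
rewrite (iv_Lp (q := k)) //; last by rewrite /p; lia.
have := iv_le L p k; have := iv_ht L (ltnW Hpk); rewrite /aa -/p; lia.
Qed.

Lemma card_Lp : #|Lp| = #|L|.
Proof. by rewrite -(ht_ge Lp (leqnn n)) ht_isect // ?ht_ge // isectn. Qed.

Lemma ht_Lp_le k : k <= n -> ht Lp k <= ht L k.
Proof.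
move=> Hkn.
have := ssn_le k; have := ssn_isect k; move Ep: (ssn k) => p Hp Hpk.
case: (ltnP p k) => Hlt; last first.
  have -> : k = p by lia.
  by rewrite ht_isect //; lia.
have Hpn : p < n by lia.
have := sen_isect Hpn; have := sen_gt p; have := sen_le Hpn.
move Eq: (sen p) => q Hqn Hq1 Hq.
have Hkq : k < q.
  rewrite ltnNge; apply/negP => H.
  by have := @ssn_spec k q; rewrite Ep Hq1 H Hq => /(_ isT).
have Epq : ssn q.-1 = p.
  apply: ssn_uniq => //; first lia.
  move=> j /andP[J1 J2]; apply: (@sen_spec p j); rewrite Eq; apply/andP; split; lia.
rewrite (iv_ht Lp (ltnW Hlt)) (iv_ht L (ltnW Hlt)) ht_isect //; last lia.
have E : iv Lp p k = k - (p + aa p q).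
  rewrite -Epq; apply: iv_Lp => //; rewrite ?Epq; lia.
rewrite E /aa.
have := iv_ivc L (ltnW Hlt) Hkn.
have := iv_ivc L (ltnW (ltn_trans Hlt Hkq)) Hqn.
have := ivc_mono L p (ltnW Hkq).
have := iv_ht L (ltnW (ltn_trans Hlt Hkq)).
lia.
Qed.

End Seg.
Section Colh.
Variable n : nat.
Implicit Types (A B X : {set 'I_n}).

Definition eB B (k : nat) := #|[set j : 'I_n | (j < k) && (j \notin B)]|.

Lemma eB_ht B k : k <= n -> eB B k = k - ht B k.
Proof.
move=> Hk; have := iv_ivc B (leq0n k) Hk; have := iv_ht B (leq0n k); rewrite ht0.
have -> : eB B k = ivc B 0 k by apply: eq_card => i; rewrite !inE leq0n andbT andbC.
lia.
Qed.

Lemma colh_eB B x : colh B x = #|[set i : 'I_n | (i \in B) && (eB B i <= x)]|.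
Proof. by []. Qed.

Lemma iv_sub B lo hi : lo <= hi -> iv B lo hi = ht B hi - ht B lo.
Proof. move=> H; have := iv_ht B H; lia. Qed.

Lemma colh_ge B x k : k <= n -> k - ht B k <= x -> ht B k <= colh B x.
Proof.
move=> Hk Hx; apply: subset_leq_card; apply/subsetP => i; rewrite !inE.
case/andP => -> Hik /=.
have Hi : i <= n by apply: ltnW.
rewrite -/(eB B i) eB_ht //.
have := iv_le B i k; have := iv_ht B (ltnW Hik); lia.
Qed.

Lemma colh_att B x : exists K, [/\ K <= n, K - ht B K <= x & colh B x = ht B K].
Proof.
have Hex : exists K, (K <= n) && (K - ht B K <= x) by exists 0; rewrite ht0.
have Hb : forall K, (K <= n) && (K - ht B K <= x) -> K <= n by move=> K /andP[].
case: (ex_maxnP Hex Hb) => K /andP[HK1 HK2] Hmax.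
exists K; split => //; apply/eqP; rewrite eqn_leq colh_ge // andbT.
apply: subset_leq_card; apply/subsetP => i; rewrite !inE.
case/andP => Hi; rewrite Hi /= -/(eB B i) eB_ht; last exact: ltnW.
move=> He; have := Hmax i.+1; rewrite ltn_ord (ht_S B (ltn_ord i)).
have -> : Ordinal (ltn_ord i) = i by apply: val_inj.
rewrite Hi /=.
have -> : i.+1 - (ht B i + 1) <= x by lia.
by move/(_ isT).
Qed.

Lemma colh_mono A B x : (forall k, k <= n -> ht A k <= ht B k) -> colh A x <= colh B x.
Proof.
move=> H; have [K [H1 H2 ->]] := colh_att A x.
apply: (leq_trans (H K H1)); apply: colh_ge => //.
have := H K H1; lia.
Qed.

Lemma sum_le_cnt m e : \sum_(x < m) (e <= x) = m - e.
Proof.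
elim: m => [|m IH]; first by rewrite big_ord0.
rewrite big_ord_recr /= IH; case: (leqP e m) => H /=; lia.
Qed.

Definition Wt B := \sum_(i in B) #|[set j : 'I_n | (j \notin B) && (i < j)]|.

Lemma sum_colh B m : #|B| + m = n -> \sum_(x < m) colh B x = Wt B.
Proof.
move=> Hm.
have E1 : forall x, colh B x = \sum_(i in B) (eB B i <= x).
  move=> x; rewrite colh_eB card_sum [RHS]big_mkcond /=.
  by apply: eq_bigr => i _; case: (i \in B).
under eq_bigr do rewrite E1.
rewrite exchange_big /Wt; apply: eq_bigr => i Hi.
rewrite sum_le_cnt.
have Hin : i < n by [].
rewrite eB_ht; last exact: ltnW.
have -> : #|[set j : 'I_n | (j \notin B) && (i < j)]| = ivc B i.+1 n.
  by apply: eq_card => j; rewrite !inE ltn_ord andbT.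
have := iv_ivc B Hin (leqnn n).
have := iv_ht B Hin; rewrite (ht_S B Hin).
rewrite -(ht_ge B (leqnn n)) in Hm.
have -> : Ordinal Hin = i by apply: val_inj.
rewrite Hi /=.
have := ht_le B i.
lia.
Qed.

End Colh.
Section Seg2.
Variable n : nat.
Variables P L : {set 'I_n}.
Hypothesis HPL : #|P| = #|L|.
Local Notation isc := (isect P L).
Local Notation Lp := (Lprime P L).
Local Notation sen := (sen P L).
Local Notation ssn := (ssn P L).

Definition Win (B : {set 'I_n}) := \sum_(i in B) #|[set j : 'I_n | (j \notin B) && (i < j) && (j < sen i)]|.
Definition Crs (B : {set 'I_n}) := \sum_(i in B) #|[set j : 'I_n | (j \notin B) && (sen i <= j)]|.

Lemma Wt_split (B : {set 'I_n}) : Wt B = Win B + Crs B.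
Proof.
rewrite /Wt /Win /Crs -big_split /=; apply: eq_bigr => i _.
rewrite !card_sum -big_split /=; apply: eq_bigr => j _.
have := sen_gt HPL i.
case: (j \in B) => //=; case: (ltnP i j) => H1; case: (ltnP j (sen i)) => H2 //=; lia.
Qed.

Lemma seg_same (i : 'I_n) j : i <= j < sen i -> ssn j = ssn i /\ sen j = sen i.
Proof.
move=> /andP[H1 H2]; have Hi : i < n by [].
have Hsn := sen_le HPL Hi.
split.
  apply: ssn_uniq; first by have := ssn_le P L i; lia.
    exact: ssn_isect.
  move=> k /andP[K1 K2]; case: (leqP k i) => Hk.
    by apply: (@ssn_spec _ P L HPL i k); rewrite K1.
  by apply: (@sen_spec _ P L HPL i k); rewrite Hk /=; lia.
apply: sen_uniq => //; first lia.
  exact: (sen_isect HPL).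
by move=> k /andP[K1 K2]; apply: (@sen_spec _ P L HPL i k); apply/andP; split; lia.
Qed.

Lemma Win_Lp : Win Lp = 0.
Proof.
apply: big1 => i Hi; apply/eqP; rewrite cards_eq0; apply/eqP/setP => j; rewrite !inE.
apply/negbTE; apply/negP => /andP[/andP[Hj H1] H2].
have [E1 E2] := @seg_same i j (introT andP (conj (ltnW H1) H2)).
move/negP: Hj; apply; change (ssn j + aa L (ssn j) (sen j) <= j); rewrite E1 E2.
by move: Hi; rewrite Lprime_in => Hi; apply: (leq_trans Hi); apply: ltnW.
Qed.

Lemma sum_part (B : {set 'I_n}) (F : nat -> nat) :
  \sum_(i in B) F (sen i) =
  \sum_(k < n.+1) #|[set i : 'I_n | (i \in B) && (sen i == k)]| * F k.
Proof.
have E : forall k : 'I_n.+1, #|[set i : 'I_n | (i \in B) && (sen i == k)]| * F k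
   = \sum_(i in B | sen i == k) F k.
  move=> k; rewrite card_sum big_distrl /= [RHS]big_mkcond /=.
  by apply: eq_bigr => i _; case: (i \in B); case: (sen i == k); rewrite /= ?mul1n ?mul0n.
under [RHS]eq_bigr do rewrite E.
rewrite (exchange_big_dep (fun i => i \in B)) /=; last by move=> k j _ /andP[].
apply: eq_bigr => i Hi.
have Hs : sen i < n.+1 by rewrite ltnS; apply: (sen_le HPL).
rewrite (bigD1 (Ordinal Hs)) /=; last by rewrite Hi eqxx.
rewrite big1 ?addn0 // => k /andP[/andP[_ /eqP Hk] Hk2]; exfalso; move/eqP: Hk2; apply; apply: val_inj => /=; by rewrite Hk.
Qed.

Lemma cntS_zero (B : {set 'I_n}) k : ~~ (isc k && (0 < k)) -> #|[set i : 'I_n | (i \in B) && (sen i == k)]| = 0.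
Proof.
move=> H; apply/eqP; rewrite cards_eq0; apply/eqP/setP => i; rewrite !inE.
apply/negbTE; apply/negP => /andP[_ /eqP Hk]; move/negP: H; apply.
rewrite -Hk (sen_isect HPL) //=; have := sen_gt HPL i; lia.
Qed.

Lemma cntS_seg (B : {set 'I_n}) k : isc k -> 0 < k -> k <= n ->
  #|[set i : 'I_n | (i \in B) && (sen i == k)]| = iv B (ssn k.-1) k.
Proof.
move=> H1 H2 H3; apply: eq_card => i; rewrite !inE.
case: (i \in B) => //=.
apply/eqP/andP.
  move=> Hs; split; first by apply: (seg_back HPL H1 H2 H3 (ltn_ord i) Hs).
  by rewrite -Hs sen_gt.
by move=> [K1 K2]; have [_ ->] := seg_in HPL H1 H2 H3 (introT andP (conj K1 K2)).
Qed.

Lemma Crs_Lp : Crs Lp = Crs L.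
Proof.
pose G (B : {set 'I_n}) (k : nat) := #|[set j : 'I_n | (j \notin B) && (k <= j)]|.
have EC : forall B, Crs B = \sum_(i in B) G B (sen i) by [].
rewrite !EC !sum_part; apply: eq_bigr => k _.
case Hk : (isc k && (0 < k)); last by rewrite !cntS_zero ?Hk.
move/andP: Hk => [Hk Hk0]; have Hkn : k <= n by rewrite -ltnS.
rewrite !cntS_seg //.
have HG : forall B, G B k = ivc B k n.
  by move=> B; apply: eq_card => j; rewrite !inE ltn_ord andbT.
rewrite !HG.
have Hp := ssn_isect P L k.-1; have Hpk := ssn_le P L k.-1.
have Hpk' : ssn k.-1 <= k by lia.
have := iv_ht Lp Hpk'; have := iv_ht L Hpk'.
rewrite (ht_isect HPL Hkn Hk) (ht_isect HPL (leq_trans Hpk' Hkn) Hp).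
move=> E1 E2.
have := iv_ivc Lp Hkn (leqnn n); have := iv_ivc L Hkn (leqnn n).
have := iv_ht Lp Hkn; have := iv_ht L Hkn.
rewrite (ht_isect HPL Hkn Hk) !(ht_ge _ (leqnn n)) card_Lp //.
move=> E3 E4 E5 E6.
have -> : iv Lp (ssn k.-1) k = iv L (ssn k.-1) k by lia.
have -> : ivc Lp k n = ivc L k n by lia.
done.
Qed.

End Seg2.
Lemma area_Win n m (P L : {set 'I_n}) : #|P| = #|L| -> #|L| + m = n ->
  area m (Lprime P L) L = Win P L L.
Proof.
move=> HPL Hm.
have Hle : forall x, colh (Lprime P L) x <= colh L x.
  by move=> x; apply: colh_mono => k Hk; apply: ht_Lp_le.
rewrite /area.
have -> : \sum_(x < m) ((colh (Lprime P L) x - colh L x) + (colh L x - colh (Lprime P L) x))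
        = \sum_(x < m) (colh L x - colh (Lprime P L) x).
  by apply: eq_bigr => x _; have := Hle x; lia.
rewrite sumnB; last by move=> x _; apply: Hle.
rewrite !sum_colh //; last by rewrite card_Lp.
rewrite !(Wt_split HPL) (Win_Lp HPL) (Crs_Lp HPL); lia.
Qed.

Section Swap.
Variable n : nat.
Implicit Types (B X Y : {set 'I_n}).

Definition sw B (i j : 'I_n) := j |: (B :\ i).

Lemma ht_U1 X (j : 'I_n) k : j \notin X -> ht (j |: X) k = ht X k + (j < k).
Proof.
move=> Hj; rewrite /ht; case: (ltnP j k) => Hjk /=.
  have -> : [set x | (x \in j |: X) && (x < k)] = j |: [set x | (x \in X) && (x < k)].
    apply/setP => x; rewrite !inE; case: (eqVneq x j) => [->|] //=; by rewrite Hjk.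
  by rewrite cardsU1 inE (negbTE Hj) /= addnC.
rewrite addn0; apply: eq_card => x; rewrite !inE.
case: (eqVneq x j) => [->|] //=; by rewrite ltnNge Hjk andbF.
Qed.

Lemma ht_D1 X (i : 'I_n) k : i \in X -> ht (X :\ i) k + (i < k) = ht X k.
Proof.
move=> Hi; rewrite /ht; case: (ltnP i k) => Hik /=.
  rewrite [in RHS](cardsD1 i) inE Hi Hik /= addnC; congr (_ + _).
  apply: eq_card => x; rewrite !inE; by case: (eqVneq x i).
rewrite addn0; apply: eq_card => x; rewrite !inE.
case: (eqVneq x i) => [->|] //=; by rewrite ltnNge Hik !andbF.
Qed.

Lemma ht_sw B (i j : 'I_n) k : i \in B -> j \notin B ->
  ht (sw B i j) k + (i < k) = ht B k + (j < k).
Proof.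
move=> Hi Hj; rewrite /sw ht_U1; last by rewrite !inE negb_and Hj orbT.
by rewrite -addnA [(j < k) + _]addnC addnA ht_D1.
Qed.

Lemma card_sw B (i j : 'I_n) : i \in B -> j \notin B -> #|sw B i j| = #|B|.
Proof.
move=> Hi Hj; rewrite /sw cardsU1 !inE negb_and Hj orbT /=.
by rewrite [in RHS](cardsD1 i) Hi.
Qed.

Lemma sw_neq B (i j : 'I_n) : j \notin B -> sw B i j != B.
Proof. move=> Hj; apply/negP => /eqP E; move/negP: Hj; apply; by rewrite -E !inE eqxx. Qed.

Lemma sw_sw B (i j : 'I_n) : i \in B -> j \notin B -> sw (sw B i j) j i = B.
Proof.
move=> Hi Hj; apply/setP => x; rewrite /sw !inE.
case: (eqVneq x i) => [->|Hxi] //=.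
case: (eqVneq x j) => [->|Hxj] //=; by rewrite (negbTE Hj).
Qed.

Lemma in_regionP P Q X : reflect (forall k, k <= n -> (ht P k <= ht X k) && (ht X k <= ht Q k))
  (in_region P Q X).
Proof.
apply: (iffP forallP) => H k.
  move=> Hk; exact: (H (Ordinal (Hk : k < n.+1))).
by apply: H; rewrite -ltnS.
Qed.

End Swap.
Section Bases.
Variables (n r : nat) (P Q : {set 'I_n}).
Hypothesis HP : #|P| = r.
Local Notation Bs := (lpm_bases r P Q).
Implicit Types (B X Y L : {set 'I_n}).

Lemma basesP X : reflect (#|X| = r /\ forall k, k <= n -> (ht P k <= ht X k) && (ht X k <= ht Q k))
  (X \in Bs).
Proof.
rewrite /lpm_bases inE; apply: (iffP andP) => [[/eqP H1 /in_regionP H2]|[H1 H2]]; split => //.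
  by apply/eqP.
by apply/in_regionP.
Qed.

Lemma sw_base L (i j : 'I_n) : L \in Bs -> i \in L -> j \notin L -> i < j ->
  (sw L i j \in Bs) = (j < sen P L i).
Proof.
move=> /basesP [HL HR] Hi Hj Hij.
have HPL : #|P| = #|L| by rewrite HL.
apply/basesP/idP.
  move=> [_ H]; rewrite ltnNge; apply/negP => Hs.
  have Hsn : sen P L i <= n := sen_le HPL (ltn_ord i).
  have := H _ Hsn; have := ht_sw (sen P L i) Hi Hj.
  have := sen_isect HPL (ltn_ord i); rewrite /isect => /eqP ->.
  rewrite (sen_gt HPL i) ltnNge Hs /=; lia.
move=> Hs; split; first by rewrite card_sw.
move=> k Hk; have := HR k Hk; have := ht_sw k Hi Hj.
case: (ltnP i k) => H1; case: (ltnP j k) => H2 /=; try lia.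
have : ~~ isect P L k by apply: (@sen_spec _ P L HPL i k); rewrite H1 /=; lia.
rewrite /isect; lia.
Qed.

Lemma Win_count L : L \in Bs ->
  Win P L L = \sum_(i in L) #|[set j : 'I_n | (i < j) && (j \notin L) && (sw L i j \in Bs)]|.
Proof.
move=> HL; apply: eq_bigr => i Hi; apply: eq_card => j; rewrite in_set [in RHS]in_set.
case: (ltnP i j) => Hij; last by rewrite !andbF andFb.
case Hj: (j \in L) => //=.
rewrite sw_base //; by rewrite Hj.
Qed.

Lemma exchange B0 B1 (i : 'I_n) : B0 \in Bs -> B1 \in Bs -> i \in B0 -> i \notin B1 ->
  exists j : 'I_n, [/\ j \in B1, j \notin B0, sw B0 i j \in Bs & sw B1 j i \in Bs].
Proof.
move=> /basesP [C0 H0] /basesP [C1 H1] Hi0 Hi1.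
have Hin : i < n by [].
have S0 := ht_S B0 Hin; have S1 := ht_S B1 Hin.
have Ei : Ordinal Hin = i by apply: val_inj.
rewrite Ei Hi0 (negbTE Hi1) /= in S0 S1.
case: (leqP (ht B1 i) (ht B0 i)) => Hcase.
-
  have Hex : exists k, (i < k) && (ht B0 k <= ht B1 k).
    by exists n; rewrite Hin /= !ht_ge // C0 C1.
  case: (ex_minnP Hex) => K /andP[HK1 HK2] Hmin.
  have HKn : K <= n by apply: Hmin; rewrite Hin /= !ht_ge // C0 C1.
  have HK3 : i.+1 < K.
    rewrite ltn_neqAle HK1 andbT; apply/negP => /eqP E; rewrite -E in HK2; lia.
  have Hjn : K.-1 < n by lia.
  set j := Ordinal Hjn.
  have Hnot : forall k, i < k < K -> ht B1 k < ht B0 k.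
    move=> k /andP[Hk1 Hk2]; rewrite ltnNge; apply/negP => Hk.
    by have := Hmin k; rewrite Hk1 Hk => /(_ isT); lia.
  have Hj := Hnot K.-1; have Tj0 := ht_S B0 Hjn; have Tj1 := ht_S B1 Hjn.
  rewrite prednK in Tj0 Tj1; last lia.
  have Hj' : ht B1 K.-1 < ht B0 K.-1 by apply: Hj; apply/andP; split; lia.
  have Hj1 : j \in B1 by move: Tj0 Tj1; case: (j \in B1); case: (j \in B0) => /=; lia.
  have Hj0 : j \notin B0 by move: Tj0 Tj1; case: (j \in B1); case: (j \in B0) => /=; lia.
  exists j; split => //; apply/basesP; split; try by rewrite card_sw.
  + move=> k Hk; have := H0 k Hk; have := H1 k Hk; have := ht_sw k Hi0 Hj0.
    have := Hnot k; rewrite /j /=.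
    case: (ltnP i k) => Q1; case: (ltnP K.-1 k) => Q2 /=; try lia.
  + move=> k Hk; have := H0 k Hk; have := H1 k Hk; have := ht_sw k Hj1 Hi1.
    have := Hnot k; rewrite /j /=.
    case: (ltnP i k) => Q1; case: (ltnP K.-1 k) => Q2 /=; try lia.
-
  have Hex : exists k, (k <= i) && (ht B1 k <= ht B0 k) by exists 0; rewrite !ht0.
  have Hb : forall k, (k <= i) && (ht B1 k <= ht B0 k) -> k <= i by move=> k /andP[].
  case: (ex_maxnP Hex Hb) => J /andP[HJ1 HJ2] Hmax.
  have HJi : J < i by rewrite ltn_neqAle HJ1 andbT; apply/negP => /eqP E; rewrite E in HJ2; lia.
  have Hjn : J < n by lia.
  set j := Ordinal Hjn.
  have Hnot : forall k, J < k <= i -> ht B0 k < ht B1 k.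
    move=> k /andP[Hk1 Hk2]; rewrite ltnNge; apply/negP => Hk.
    by have := Hmax k; rewrite Hk2 Hk => /(_ isT); lia.
  have Tj0 := ht_S B0 Hjn; have Tj1 := ht_S B1 Hjn.
  have Hj' := Hnot J.+1 (introT andP (conj (ltnSn J) HJi)).
  have Hj1 : j \in B1 by move: Tj0 Tj1; case: (j \in B1); case: (j \in B0) => /=; lia.
  have Hj0 : j \notin B0 by move: Tj0 Tj1; case: (j \in B1); case: (j \in B0) => /=; lia.
  exists j; split => //; apply/basesP; split; try by rewrite card_sw.
  + move=> k Hk; have := H0 k Hk; have := H1 k Hk; have := ht_sw k Hi0 Hj0.
    have := Hnot k; rewrite /j /=.
    case: (ltnP i k) => Q1; case: (ltnP J k) => Q2 /=; try lia.
  + move=> k Hk; have := H0 k Hk; have := H1 k Hk; have := ht_sw k Hj1 Hi1.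
    have := Hnot k; rewrite /j /=.
    case: (ltnP i k) => Q1; case: (ltnP J k) => Q2 /=; try lia.
Qed.

End Bases.
From mathcomp Require Import ring lra.
Import GRing.Theory Num.Theory.

Section Geo.
Variable R : realType.
Variable n : nat.
Implicit Types (B X Y Z : {set 'I_n}).
Local Open Scope ring_scope.

Lemma dot_pt (c : 'rV[R]_n) B : dotv c (ptvec R B) = \sum_(k in B) c 0 k.
Proof.
rewrite /dotv [RHS]big_mkcond; apply: eq_bigr => k _; rewrite mxE.
by case: (k \in B); rewrite ?mulr1 ?mulr0.
Qed.

Lemma ptvec_inj : injective (@ptvec n R).
Proof.
move=> A B E; apply/setP => k; have := congr1 (fun v : 'rV[R]_n => v 0 k) E.
rewrite /= !mxE => /eqP; rewrite eqr_nat.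
by case: (k \in A); case: (k \in B).
Qed.

Lemma dot_sw (c : 'rV[R]_n) B (i j : 'I_n) : i \in B -> j \notin B ->
  dotv c (ptvec R (sw B i j)) + c 0 i = dotv c (ptvec R B) + c 0 j.
Proof.
move=> Hi Hj; rewrite !dot_pt /sw big_setU1 /=; last by rewrite !inE negb_and Hj orbT.
rewrite [in RHS](big_setD1 i Hi) /=.
set s := \sum_(k in B :\ i) c 0 k.
lra.
Qed.

Lemma faceP (Bs : {set {set 'I_n}}) (c : 'rV[R]_n) B :
  reflect (B \in Bs /\ forall B', B' \in Bs -> dotv c (ptvec R B') <= dotv c (ptvec R B))
    (B \in face_of Bs c).
Proof.
rewrite /face_of inE; apply: (iffP andP) => [[H1 /forall_inP H2]|[H1 H2]]; split => //.
by apply/forall_inP.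
Qed.

Lemma diffmx_row (S : {set {set 'I_n}}) B0 (j : 'I_#|S|) : row j (Defs.diffmx R S B0) = ptvec R (enum_val j) - ptvec R B0.
Proof. by apply/rowP => k; rewrite !mxE. Qed.

Lemma rank1_par p (M : 'M[R]_(p, n)) a : \rank M = 1%N -> row a M != 0 ->
  forall b, exists l : R, row b M = l *: row a M.
Proof.
move=> Hr Ha b; apply/sub_rVP.
have Hs : (row a M <= M)%MS := row_sub a M.
case: (mxrank_leqif_sup Hs) => _ E.
rewrite rank_rV Ha Hr /= in E.
have HM : (M <= row a M)%MS by rewrite -E.
exact: submx_trans (row_sub b M) HM.
Qed.

Lemma sum_in_card Y Z : (\sum_(k in Y) (k \in Z) = #|Y :&: Z|)%N.
Proof.
rewrite -sum1_card big_mkcond [RHS]big_mkcond /=; apply: eq_bigr => k _; rewrite inE.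
by case: (k \in Y); case: (k \in Z).
Qed.

Lemma inter_eq Y Z : #|Y| = #|Z| -> #|Y :&: Z| = #|Y| -> Y = Z.
Proof.
move=> H1 H2.
have E1 : Y :&: Z = Y by apply/eqP; rewrite eqEcard subsetIl H2 leqnn.
have HYZ : Y \subset Z by apply/setIidPl.
by apply/eqP; rewrite eqEcard HYZ H1 leqnn.
Qed.

Lemma inter_le Y Z : (#|Y :&: Z| <= #|Y|)%N.
Proof. by apply: subset_leq_card; apply: subsetIl. Qed.

End Geo.
Section Edges.
Variable R : realType.
Variables (n r : nat) (P Q : {set 'I_n}).
Hypothesis HP : #|P| = r.
Local Notation Bs := (lpm_bases r P Q).
Implicit Types (B X Y L : {set 'I_n}).
Local Open Scope ring_scope.

Definition Etrip (t : {set 'I_n} * 'I_n * 'I_n) : bool :=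
  [&& t.1.1 \in Bs, t.1.2 \in t.1.1, t.2 \notin t.1.1, (t.1.2 < t.2)%N & sw t.1.1 t.1.2 t.2 \in Bs].
Definition fE (t : {set 'I_n} * 'I_n * 'I_n) : {set {set 'I_n}} := [set t.1.1; sw t.1.1 t.1.2 t.2].

Lemma bnd L X Y : L \in Bs -> X \in Bs -> L != X -> #|L :&: X| = r.-1 -> Y \in Bs ->
  (#|Y :&: L| + #|Y :&: X| <= r + r.-1)%N /\
  ((#|Y :&: L| + #|Y :&: X| = r + r.-1)%N -> Y = L \/ Y = X).
Proof.
move=> /basesP [CL _] /basesP [CX _] HLX HI /basesP [CY _].
have aL := inter_le Y L; have aX := inter_le Y X.
case: (eqVneq #|Y :&: L| r) => Ha.
  have EY : Y = L by apply: inter_eq; rewrite ?CY ?CL ?Ha.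
  rewrite EY setIid CL HI; split; [lia | by left].
case: (eqVneq #|Y :&: X| r) => Hb.
  have EY : Y = X by apply: inter_eq; rewrite ?CY ?CX ?Hb.
  rewrite EY setIid CX (setIC X L) HI; split; [lia | by right].
have Hr : (0 < r)%N.
  case: (posnP r) => // H0; exfalso; move/negP: HLX; apply.
  have -> : L = set0 by apply/eqP; rewrite -cards_eq0 CL H0.
  have -> : X = set0 by apply/eqP; rewrite -cards_eq0 CX H0.
  by [].
split; lia.
Qed.

Lemma pair_edge L X : L \in Bs -> X \in Bs -> L != X -> #|L :&: X| = r.-1 ->
  is_edge R Bs [set L; X].
Proof.
move=> HL HX HLX HI.
have CL : #|L| = r by case/basesP: HL.
split.
  pose c : 'rV[R]_n := \row_k ((((k \in L) : nat) + (k \in X))%:R).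
  have Hdot : forall Y, dotv c (ptvec R Y) = ((#|Y :&: L| + #|Y :&: X|)%N)%:R.
    move=> Y; rewrite dot_pt; under eq_bigr do rewrite mxE.
    by rewrite -natr_sum big_split /= !sum_in_card.
  exists c; apply/setP => Y; apply/set2P/faceP.
    case=> ->; split => // B' HB'; rewrite !Hdot ler_nat.
      rewrite setIid CL HI; exact: (bnd HL HX HLX HI HB').1.
    have CX : #|X| = r by case/basesP: HX.
    rewrite setIid (setIC X L) HI CX; have := (bnd HL HX HLX HI HB').1; lia.
  move=> [HY Hm]; have := Hm L HL; rewrite !Hdot ler_nat setIid CL => H.
  apply: (bnd HL HX HLX HI HY).2.
  have := (bnd HL HX HLX HI HY).1; lia.
exists L; first by rewrite !inE eqxx.
set M := Defs.diffmx R [set L; X] L.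
have HXS : X \in [set L; X] by rewrite !inE eqxx orbT.
set jX := enum_rank_in HXS X.
have RX : row jX M = ptvec R X - ptvec R L by rewrite /M diffmx_row enum_rankK_in.
have RXn : row jX M != 0.
  rewrite RX subr_eq0; apply/negP => /eqP /ptvec_inj E; move/negP: HLX; apply; by rewrite E.
apply/eqP; rewrite eqn_leq; apply/andP; split.
  apply: (leq_trans (mxrankS (_ : (M <= row jX M)%MS))); last exact: rank_leq_row.
  apply/row_subP => j; rewrite /M diffmx_row; have := enum_valP j; case/set2P => ->.
    by rewrite subrr sub0mx.
  by rewrite -RX submx_refl.
rewrite lt0n mxrank_eq0; apply/negP => /eqP HM; move/negP: RXn; apply.
by rewrite HM row0.
Qed.

Lemma trip_edge t : Etrip t -> is_edge R Bs (fE t).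
Proof.
case: t => [[L i] j] /and5P [/= HL Hi Hj Hij HX].
apply: pair_edge => //; first by rewrite eq_sym sw_neq.
have CL : #|L| = r by case/basesP: HL.
have -> : L :&: sw L i j = L :\ i.
  apply/setP => x; rewrite /sw !inE.
  case: (eqVneq x j) => [->|] /=; first by rewrite (negbTE Hj) andbF.
  by case: (x \in L); rewrite /= ?andbT ?andbF.
have := cardsD1 i L; rewrite Hi CL => ->; by [].
Qed.

Lemma edge_char S : is_edge R Bs S -> exists t, Etrip t && (S == fE t).
Proof.
move=> [[c Hc] [B0 HB0 Hr]].
have HB0' := HB0; rewrite Hc in HB0'; case/faceP: HB0' => HB0b Hmax0.
set M := Defs.diffmx R S B0.
have [B1 HB1 Hne] : exists2 B1, B1 \in S & B1 != B0.
  case: (pickP [pred Y in S | Y != B0]) => [B1 /andP[H1 H2]|H0]; first by exists B1.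
  have HM : M = 0.
    apply/matrixP => a b; rewrite !mxE.
    have := H0 (enum_val a); rewrite /= enum_valP /= => /negbFE /eqP ->.
    by rewrite subrr.
  by move: Hr; rewrite /M in HM; rewrite HM mxrank0.
have HB1' := HB1; rewrite Hc in HB1'; case/faceP: HB1' => HB1b Hmax1.
have C0 : #|B0| = r by case/basesP: HB0b.
have C1 : #|B1| = r by case/basesP: HB1b.
have [i Hi0 Hi1] : exists2 i, i \in B0 & i \notin B1.
  apply/subsetPn; apply/negP => Hsub; move/negP: Hne; apply.
  by rewrite eq_sym eqEcard Hsub C0 C1 leqnn.
have [j [Hj1 Hj0 HX0 HX1]] := exchange HP HB0b HB1b Hi0 Hi1.
set X0 := sw B0 i j.
have Hd0 := dot_sw c Hi0 Hj0; have Hd1 := dot_sw c Hj1 Hi1.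
have E01 := Hmax0 B1 HB1b; have E10 := Hmax1 B0 HB0b.
have Ex0 := Hmax0 X0 HX0; have Ex1 := Hmax1 _ HX1.
have Heq : dotv c (ptvec R X0) = dotv c (ptvec R B0) by rewrite /X0; lra.
have HX0S : X0 \in S.
  rewrite Hc; apply/faceP; split => // B' HB'; rewrite Heq; exact: Hmax0.
have HjX0 : j \in X0 by rewrite /X0 /sw !inE eqxx.
set jX := enum_rank_in HX0S X0.
have RX : row jX M = ptvec R X0 - ptvec R B0 by rewrite /M diffmx_row enum_rankK_in.
have RXn : row jX M != 0.
  rewrite RX subr_eq0; apply/negP => /eqP /ptvec_inj E.
  by move/negP: Hj0; apply; rewrite -E.
have HS : forall Y, Y \in S -> Y = B0 \/ Y = X0.
  move=> Y HY; set jY := enum_rank_in HY Y.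
  have [l Hl] := rank1_par Hr RXn jY.
  rewrite RX /jY /M diffmx_row enum_rankK_in // in Hl.
  have := congr1 (fun v : 'rV[R]_n => v 0 j) Hl; rewrite /= !mxE HjX0 (negbTE Hj0) /=.
  case HjY : (j \in Y) => /= Hlj.
    have Hl1 : l = 1 by move: Hlj; rewrite /=; lra.
    right; apply: ptvec_inj; apply: (subIr (ptvec R B0)); move: Hl; rewrite Hl1 scale1r; exact.
  have Hl0 : l = 0 by move: Hlj; rewrite /=; lra.
  left; apply: ptvec_inj; apply: subr0_eq; move: Hl; rewrite Hl0 scale0r; exact.
have ES : S = [set B0; X0].
  apply/setP => Y; apply/idP/set2P; first exact: HS.
  by case=> ->.
have Hij : i != j by apply/negP => /eqP E; move/negP: Hj0; apply; rewrite -E.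
case: (ltnP i j) => Hlt.
  exists (B0, i, j); rewrite /Etrip /= HB0b Hi0 Hj0 Hlt HX0 /= ES /fE /=.
  by [].
have Hlt' : (j < i)%N by rewrite ltn_neqAle Hlt andbT eq_sym; apply/negP => /eqP /val_inj E; move/negP: Hij; apply; rewrite E.
exists (X0, j, i); rewrite /Etrip /= HX0 HjX0 /= Hlt' /X0 sw_sw // HB0b /=.
have -> : i \notin sw B0 i j by rewrite /sw !inE negb_or Hij eqxx.
by rewrite ES /fE /= sw_sw // setUC.
Qed.

End Edges.
Lemma pair_eq (T : finType) (a b c d : T) : a != b -> [set a; b] = [set c; d] ->
  (a = c /\ b = d) \/ (a = d /\ b = c).
Proof.
move=> Hab E.
have Ha : a \in [set c; d] by rewrite -E set21.
have Hb : b \in [set c; d] by rewrite -E set22.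
have Hc : c \in [set a; b] by rewrite E set21.
have Hd : d \in [set a; b] by rewrite E set22.
case/set2P: Ha => Ha; case/set2P: Hb => Hb; subst.
- by move/negP: Hab; case.
- by left.
- by right.
- by move/negP: Hab; case.
Qed.

Section Count.
Variables (n r : nat) (P Q : {set 'I_n}).
Hypothesis HP : #|P| = r.
Local Notation Bs := (lpm_bases r P Q).

Lemma sw_inj (L : {set 'I_n}) (i1 j1 i2 j2 : 'I_n) : i1 \in L -> j1 \notin L -> i2 \in L -> j2 \notin L ->
  sw L i1 j1 = sw L i2 j2 -> i1 = i2 /\ j1 = j2.
Proof.
move=> H1 H2 H3 H4 E.
have := congr1 (fun A : {set 'I_n} => i1 \in A) E; have := congr1 (fun A : {set 'I_n} => j1 \in A) E.
rewrite /= /sw !inE eqxx /= eqxx /= (negbTE H2).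
have Hij1 : (i1 == j1) = false by apply/negbTE; apply/negP => /eqP E1; move/negP: H2; apply; rewrite -E1.
have Hij2 : (i1 == j2) = false by apply/negbTE; apply/negP => /eqP E1; move/negP: H4; apply; rewrite -E1.
rewrite Hij1 Hij2 H1 /= andbT andbF orbF.
move=> /esym /eqP -> /esym /negbFE /eqP ->; by [].
Qed.

Lemma fE_inj : {in [pred t | Etrip r P Q t] &, injective (@fE n)}.
Proof.
move=> [[L1 i1] j1] [[L2 i2] j2]; rewrite !inE /Etrip /=.
move=> /and5P [HL1 Hi1 Hj1 Hl1 HX1] /and5P [HL2 Hi2 Hj2 Hl2 HX2].
rewrite /fE /= => E.
have Hne : L1 != sw L1 i1 j1 by rewrite eq_sym sw_neq.
case: (pair_eq Hne E) => [[EL ES]|[EL ES]].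
  subst L2; have [-> ->] := sw_inj Hi1 Hj1 Hi2 Hj2 ES; by [].
exfalso.
have Hj2L1 : j2 \in L1 by rewrite EL /sw !inE eqxx.
have Hj1L2 : j1 \in L2 by rewrite -ES /sw !inE eqxx.
have E1 : j2 = i1.
  move: Hj2; rewrite -ES /sw !inE negb_or Hj2L1 andbT negbK => /andP[_ /eqP]; by [].
have E2 : j1 = i2.
  move: Hj1; rewrite EL /sw !inE negb_or Hj1L2 andbT negbK => /andP[_ /eqP]; by [].
have : (i1 < j1 < j2)%N by rewrite Hl1 E2 Hl2.
by rewrite E1; case/andP => A B; have := ltn_trans A B; rewrite ltnn.
Qed.

Lemma card_pred_sum (T : finType) (f : pred T) : #|[pred x | f x]| = \sum_x (f x : nat).
Proof. by rewrite -sum1_card big_mkcond /=; apply: eq_bigr => x _; rewrite inE; case: (f x). Qed.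

Lemma card_E :
  #|[set fE t | t in [pred t | Etrip r P Q t]]| =
  \sum_(L in Bs) \sum_(i in L) #|[set j : 'I_n | (i < j) && (j \notin L) && (sw L i j \in Bs)]|.
Proof.
rewrite card_in_imset; last exact: fE_inj.
rewrite card_pred_sum.
have E1 : \sum_(t : {set 'I_n} * 'I_n * 'I_n) (Etrip r P Q t : nat) =
          \sum_(a : {set 'I_n} * 'I_n) \sum_(b : 'I_n) (Etrip r P Q (a, b) : nat).
  rewrite pair_big /=; apply: eq_bigr => -[a b] _; by [].
rewrite E1.
have E2 : \sum_(a : {set 'I_n} * 'I_n) \sum_(b : 'I_n) (Etrip r P Q (a, b) : nat) =
          \sum_(L : {set 'I_n}) \sum_(i : 'I_n) \sum_(b : 'I_n) (Etrip r P Q ((L, i), b) : nat).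
  rewrite [RHS]pair_big /=; apply: eq_bigr => -[a b] _; by [].
rewrite E2 [RHS]big_mkcond /=; apply: eq_bigr => L _.
case HL : (L \in Bs); last first.
  by rewrite big1 // => i _; rewrite big1 // => j _; rewrite /Etrip /= HL.
rewrite [RHS]big_mkcond /=; apply: eq_bigr => i _.
case Hi : (i \in L); last first.
  by rewrite big1 // => j _; rewrite /Etrip /= HL Hi.
rewrite card_sum; apply: eq_bigr => j _; rewrite /Etrip /= HL Hi /=.
by case: (j \in L); case: (i < j)%N; rewrite /= ?andbF.
Qed.

End Count.

Unset Implicit Arguments.

Theorem corollary5p9 (R : realType) (m r : nat) (P Q : {set 'I_(m + r)}) :
  #|P| = r -> #|Q| = r ->
  (* P never goes above Q *)
  (forall k : nat, k <= m + r -> ht P k <= ht Q k) ->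
  (* [P,Q] connected: P and Q meet only at (0,0) and (m,r) *)
  (forall k : nat, 0 < k < m + r -> ht P k < ht Q k) ->
  exists E : {set {set {set 'I_(m + r)}}},
    (forall S, S \in E <-> is_edge R (lpm_bases r P Q) S) /\
    #|E| = \sum_(L : {set 'I_(m + r)} | (#|L| == r) && in_region P Q L)
              area m (Lprime P L) L.
Proof.
move=> HP HQ _ _.
exists [set fE t | t in [pred t | Etrip r P Q t]]; split.
  move=> S; split.
    case/imsetP => t; rewrite inE => Ht ->; exact: (trip_edge R HP Ht).
  move/(edge_char HP) => [t /andP[Ht /eqP ->]]; apply/imsetP; exists t => //; by rewrite inE.
rewrite card_E.
apply: eq_big => [L|L HL]; first by rewrite inE.
have HL' : L \in lpm_bases r P Q by [].
have CL : #|L| = r by case/basesP: HL'.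
rewrite (area_Win (m := m) (P := P) (L := L)); last by rewrite CL addnC.
  by rewrite (Win_count HP HL').
by rewrite CL.
Qed.

Print Assumptions corollary5p9.
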